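(* Let $G$ be a connected graph on $N\ge2$ vertices with minimum vertex degree $D_{\min}\ge1$, and let $\rho$ be $|\psi_G\rangle$ subjected to independent local $Z$-noise with probability $p\in[0,1/2]$ on each qubit. If $$2(1-p)^{D_{\min}+1}\le (1-p)^{D_{\min}}+p^{D_{\min}},$$ then $\rho$ cannot be purified to $|\psi_G\rangle$ by any protocol.
   Context: Graph state $|\psi_G\rangle$: common $+1$ eigenstate of $K_i=X_i\prod_{\{i,j\}\in E_G}Z_j$ (equivalently $|+\rangle^{\otimes N}$ followed by controlled-phase gates along every edge). Local $Z$-noise with probability $p$: $\rho=\sum_{j\in\{0,1\}^N}p^{|j|}(1-p)^{N-|j|}Z_j|\psi_G\rangle\langle\psi_G|Z_j$. Purification: each qubit held by a distinct party holding that qubit from arbitrarily many copies; using SLOCC they must produce $|\psi_G\rangle$ with fidelity arbitrarily close to 1. Known input: a two-qubit Bell-diagonal state with weight $\lambda_{00}$ on the target Bell state is purifiable iff $\lambda_{00}>1/2$. *)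

(* Defs.v *)
From HB Require Import structures.
From mathcomp Require Import all_boot all_order all_algebra.
From mathcomp Require Import reals.
From mathcomp Require Import complex.
Set Implicit Arguments. Unset Strict Implicit. Unset Printing Implicit Defensive.
Import Order.TTheory GRing.Theory Num.Theory.
Local Open Scope ring_scope.
Local Open Scope complex_scope.

Definition simple_graph (N : nat) (adj : rel 'I_N) : Prop :=
  symmetric adj /\ irreflexive adj.

Definition connected_graph (N : nat) (adj : rel 'I_N) : Prop :=
  forall i j : 'I_N, connect adj i j.

Definition degree (N : nat) (adj : rel 'I_N) (i : 'I_N) : nat :=
  #|[set j | adj i j]|.

Definition is_min_degree (N : nat) (adj : rel 'I_N) (D : nat) : Prop :=
  (forall i, D <= degree adj i)%N /\ exists i, degree adj i = D.

(* computational basis of N qubits: x : {ffun 'I_N -> bool} (x i = true <-> |1>) *)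
Notation basis N := {ffun 'I_N -> bool}.

Section QState.
Variable R : realType.
Local Notation C := R[i].

Definition sgn (b : bool) : C := if b then -1 else 1.

(* amplitude of the graph state |psi_G> = prod_{edges} CZ |+>^N :
   psi_G(x) = 2^{-N/2} (-1)^{#edges {i,j} with x_i = x_j = 1} *)
Definition graph_amp (N : nat) (adj : rel 'I_N) (x : basis N) : C :=
  ((Num.sqrt (2%:R ^+ N : R))^-1)%:C *
  \prod_(i : 'I_N) \prod_(j : 'I_N | (i < j)%N && adj i j) sgn (x i && x j).

(* the noisy state rho = sum_j p^|j| (1-p)^(N-|j|) Z_j |psi_G><psi_G| Z_j ,
   as a matrix indexed by basis states:  rho(x,y) = <x|rho|y>  *)
Definition noisy_rho (N : nat) (adj : rel 'I_N) (p : R) (x y : basis N) : C :=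
  \sum_(jz : basis N)
    (p ^+ #|[set i | jz i]| * (1 - p) ^+ (N - #|[set i | jz i]|))%:C *
    ((\prod_(i : 'I_N) sgn (jz i && x i)) * graph_amp adj x) *
    ((\prod_(i : 'I_N) sgn (jz i && y i)) * graph_amp adj y)^*.

(* n copies: basis states X : {ffun 'I_n -> basis N}, X k i = qubit i of copy k *)
Definition rho_copies (N n : nat) (adj : rel 'I_N) (p : R)
    (X Y : {ffun 'I_n -> basis N}) : C :=
  \prod_(k : 'I_n) noisy_rho adj p (X k) (Y k).

(* A local (SLOCC) operation of party i: a linear map from the party's n input
   qubits (basis {ffun 'I_n -> bool}) to one output qubit;
   A i b u = <b| A_i |u>.  A successful SLOCC branch acts by the Kraus operator
   K = A_1 (x) ... (x) A_N. *)
Definition kraus (N n : nat) (A : 'I_N -> bool -> {ffun 'I_n -> bool} -> C)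
    (z : basis N) (X : {ffun 'I_n -> basis N}) : C :=
  \prod_(i : 'I_N) A i (z i) [ffun k => X k i].

Definition slocc_out (N n : nat) (adj : rel 'I_N) (p : R)
    (A : 'I_N -> bool -> {ffun 'I_n -> bool} -> C) (z w : basis N) : C :=
  \sum_(X : {ffun 'I_n -> basis N}) \sum_(Y : {ffun 'I_n -> basis N})
    kraus A z X * rho_copies adj p X Y * (kraus A w Y)^*.

Definition out_trace (N n : nat) (adj : rel 'I_N) (p : R)
    (A : 'I_N -> bool -> {ffun 'I_n -> bool} -> C) : C :=
  \sum_(z : basis N) slocc_out adj p A z z.

Definition out_overlap (N n : nat) (adj : rel 'I_N) (p : R)
    (A : 'I_N -> bool -> {ffun 'I_n -> bool} -> C) : C :=
  \sum_(z : basis N) \sum_(w : basis N)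
    (graph_amp adj z)^* * slocc_out adj p A z w * graph_amp adj w.

(* rho is purifiable to |psi_G>: for every eps > 0 there are a number n of copies
   and local operations succeeding with nonzero probability whose normalised
   output has fidelity <psi_G|sigma|psi_G>/tr sigma >= 1 - eps. *)
Definition purifiable (N : nat) (adj : rel 'I_N) (p : R) : Prop :=
  forall eps : R, 0 < eps ->
    exists (n : nat) (A : 'I_N -> bool -> {ffun 'I_n -> bool} -> C),
      out_trace adj p A != 0 /\
      ((1 - eps)%:C * out_trace adj p A <= out_overlap adj p A).

End QState.

(* Main.v *)
Require Import Defs.
From HB Require Import structures.
From mathcomp Require Import all_boot all_order all_algebra.
From mathcomp Require Import reals complex ring lra.
Set Implicit Arguments. Unset Strict Implicit. Unset Printing Implicit Defensive.
Import Order.TTheory GRing.Theory Num.Theory.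
Local Open Scope complex_scope.
Local Open Scope ring_scope.

Section Kinds.
Variable R : realType.
Local Notation C := R[i].

Definition K := ('I_5 * bool)%type.
Definition eps (e : bool) : C := if e then -1 else 1.
Definition I : C := 'i.

Definition fA (k : K) (b : bool) : C :=
  match val k.1 with
  | 0 => if b then eps k.2 else 1
  | 1 | 2 => if b then I * eps k.2 else 1
  | _ => (b == k.2)%:R
  end.
Definition fAc (k : K) (b : bool) : C :=
  match val k.1 with
  | 0 => if b then eps k.2 else 1
  | 1 | 2 => if b then - I * eps k.2 else 1
  | _ => (b == k.2)%:R
  end.
Definition gB (k : K) (b : bool) : C :=
  match val k.1 with
  | 0 => if b then eps k.2 else 1
  | 1 => if b then - I * eps k.2 else 1
  | 2 => if b then I * eps k.2 else 1
  | 3 => (b == k.2)%:R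
  | _ => (b == ~~ k.2)%:R
  end.
Definition gBc (k : K) (b : bool) : C :=
  match val k.1 with
  | 0 => if b then eps k.2 else 1
  | 1 => if b then I * eps k.2 else 1
  | 2 => if b then - I * eps k.2 else 1
  | 3 => (b == k.2)%:R
  | _ => (b == ~~ k.2)%:R
  end.
Definition coefC (qq r rb M : C) (k : K) : C :=
  match val k.1 with
  | 0 => qq * (r + rb) / 8%:R
  | 1 => qq * (M - rb) / 8%:R
  | 2 => qq * (M - r) / 8%:R
  | 3 => (r - qq * M) / 2%:R
  | _ => (rb - qq * M) / 2%:R
  end.

Lemma IJ : I^* = - I.
Proof. by apply/eqP; rewrite eq_complex /= !oppr0 !eqxx. Qed.
Lemma II : I * I = -1.
Proof. by rewrite -expr2 sqr_i. Qed.
Lemma epsJ e : (eps e)^* = eps e.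
Proof. by rewrite /eps; case: e; rewrite ?rmorphN1 ?rmorph1. Qed.
Lemma natJ (b : bool) : (b%:R : C)^* = b%:R.
Proof. by case: b; rewrite ?rmorph1 ?rmorph0. Qed.

Lemma cjM (x y : C) : (x * y)^* = x^* * y^*.
Proof. exact: rmorphM. Qed.
Lemma cjN (x : C) : (- x)^* = - x^*.
Proof. exact: rmorphN. Qed.
Lemma cjD (x y : C) : (x + y)^* = x^* + y^*.
Proof. exact: rmorphD. Qed.
Lemma cj1 : (1 : C)^* = 1.
Proof. exact: rmorph1. Qed.

Lemma fAJ k b : (fA k b)^* = fAc k b.
Proof.
rewrite /fA /fAc; case: k => [[[|[|[|n]]] hk] e] /=;
  case: b; rewrite ?cjM ?cjN ?IJ ?epsJ ?cj1 ?natJ ?mulNr //. 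
Qed.
Lemma gBJ k b : (gB k b)^* = gBc k b.
Proof.
rewrite /gB /gBc; case: k => [[[|[|[|[|n]]]] hk] e] /=;
  case: b; rewrite ?cjM ?cjN ?IJ ?epsJ ?cj1 ?natJ ?mulNr ?opprK //.
Qed.

Lemma sumK (G : K -> C) : \sum_(k : K) G k = \sum_(i < 5) \sum_(e : bool) G (i, e).
Proof. by rewrite pair_bigA; apply: eq_bigr => -[]. Qed.

Lemma key_id (qq r rb M A B A' B' G G' : C) (xa ya : bool) :
  \sum_(k : K) coefC qq r rb M k * (fA k xa * (gB k false * A + gB k true * B) * G) *
     (fAc k ya * (gBc k false * A' + gBc k true * B') * G')
  = 2%:R^-1 * (r * (if xa then B else A) * (if ya then B' else A') *
        (if xa == ya then 1 else qq) * G * G' +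
        rb * (if xa then A else B) * (if ya then A' else B') *
        (if xa == ya then 1 else qq) * G * G').
Proof.
rewrite sumK !big_ord_recr big_ord0 /= !big_bool /=.
rewrite /coefC /fA /fAc /gB /gBc /eps /=.
have hI := II.
case: xa; case: ya => /=; move: I hI => I0 hI0; field: hI0. all: try done.
Qed.
End Kinds.
Arguments fA {R} k b.
Arguments fAc {R} k b.
Arguments gB {R} k b.
Arguments gBc {R} k b.
Arguments eps {R} e.
Arguments I {R}.


Section Basics.
Variable R : realType.
Local Notation C := R[i].

Lemma sgnJ b : (sgn R b)^* = sgn R b.
Proof. by rewrite /sgn; case: b; rewrite ?rmorphN1 ?rmorph1. Qed.

Lemma sgnK b : sgn R b * sgn R b = 1.
Proof. by case: b; rewrite /sgn ?mulrNN mulr1. Qed.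

Lemma sgn_xor b c x : sgn R ((b (+) c) && x) = sgn R (b && x) * sgn R (c && x).
Proof. by case: b; case: c; case: x; rewrite /sgn /= ?mulrNN ?mulr1 ?mul1r. Qed.

Lemma sgnN b x : sgn R (~~ b && x) = sgn R (b && x) * sgn R x.
Proof. by case: b; case: x; rewrite /sgn /= ?mulrNN ?mulr1 ?mul1r. Qed.

Variable N : nat.
Variable adj : rel 'I_N.
Hypothesis adj_sym : symmetric adj.
Hypothesis adj_irr : irreflexive adj.
Variable a : 'I_N.

Definition upd (z : basis N) (b : bool) : basis N :=
  [ffun i => if i == a then b else z i].

Lemma upd_a z b : upd z b a = b.
Proof. by rewrite ffunE eqxx. Qed.
Lemma upd_ne z b i : i != a -> upd z b i = z i.
Proof. by rewrite ffunE => /negbTE ->. Qed.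
Lemma upd_upd z b c : upd (upd z b) c = upd z c.
Proof. by apply/ffunP=> i; rewrite !ffunE; case: eqP. Qed.
Lemma upd_id z : upd z (z a) = z.
Proof. by apply/ffunP=> i; rewrite !ffunE; case: eqP => // ->. Qed.

Definition Pa (z : basis N) : C := \prod_i sgn R (adj a i && z i).

Lemma Pa_upd z b : Pa (upd z b) = Pa z.
Proof.
apply: eq_bigr => i _; rewrite ffunE; case: eqP => // ->.
by rewrite adj_irr.
Qed.

Lemma PaJ z : (Pa z)^* = Pa z.
Proof. by rewrite rmorph_prod; apply: eq_bigr => i _; apply: sgnJ. Qed.

Lemma PaK z : Pa z * Pa z = 1.
Proof. by rewrite -big_split /= big1 // => i _; rewrite sgnK. Qed.

Definition ph (z : basis N) : C := if z a then Pa z else 1.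

Lemma prod_cond_a (X : C) (E : pred 'I_N) :
  \prod_(j | E j) (if j == a then X else 1) = if E a then X else 1.
Proof.
rewrite (big_mkcond E) (bigD1 a) //= big1 ?mulr1.
  by case: (E a); rewrite ?eqxx.
by move=> j /negbTE ->; case: (E j).
Qed.

Lemma graph_amp_upd z :
  graph_amp R adj z = graph_amp R adj (upd z false) * ph z.
Proof.
rewrite /graph_amp -mulrA; congr (_ * _).
pose D i j := if z a then (if i == a then sgn R (z j) else if j == a then sgn R (z i) else 1) else 1.
have HF : forall i j : 'I_N, (i < j)%N && adj i j ->
   sgn R (z i && z j) = sgn R (upd z false i && upd z false j) * D i j.
  move=> i j /andP [lij _]; rewrite /D !ffunE.
  have nij : i != j by apply/eqP => eij; rewrite eij ltnn in lij.
  case: (eqVneq i a) => [eia|nia]; case: (eqVneq j a) => [eja|nja].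
  - by rewrite eia eja eqxx in nij.
  - rewrite eia; case: (z a); rewrite /= ?andbT ?andbF ?mul1r ?mulr1 //.
  - rewrite eja; case: (z a); rewrite /= ?andbT ?andbF ?mul1r ?mulr1 //.
  - by case: (z a); rewrite ?mulr1.
rewrite (eq_bigr (fun i : 'I_N => \prod_(j : 'I_N | (i < j)%N && adj i j)
     (sgn R (upd z false i && upd z false j) * D i j))); last first.
  by move=> i _; apply: eq_bigr => j; apply: HF.
under eq_bigr do rewrite big_split /=.
rewrite big_split /=; congr (_ * _).
rewrite /ph /D; case: (z a); last by rewrite big1 // => i _; rewrite big1.
rewrite (bigD1 a) //= [X in _ * X](eq_bigr (fun i : 'I_N =>
   if (i < a)%N && adj i a then sgn R (z i) else 1)); last first.
  move=> i nia; rewrite (negbTE nia).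
  exact: (prod_cond_a (sgn R (z i)) (fun j => (i < j)%N && adj i j)).
rewrite eqxx (big_mkcond (fun i : 'I_N => (a < i)%N && adj a i)).
rewrite (big_mkcond (fun i : 'I_N => i != a)) /Pa -big_split /=.
apply: eq_bigr => j _; rewrite (adj_sym j a).
case: (ltngtP a j) => [laj|lja|eaj] /=.
- have -> : j != a by apply/eqP => e; rewrite e ltnn in laj.
  by case: (adj a j); rewrite ?mulr1 ?mul1r.
- have -> : j != a by apply/eqP => e; rewrite e ltnn in lja.
  by rewrite mul1r; case: (adj a j).
- have -> : j = a by apply/val_inj.
  by rewrite adj_irr eqxx /= mulr1.
Qed.


Variable p : R.
Definition q : R := 1 - 2 * p.
Definition g0 (z : basis N) : C := graph_amp R adj (upd z false).
Definition chi (s z : basis N) : C :=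
  \prod_i (if i == a then 1 else sgn R (s i && z i)).
Definition s1 (s : basis N) : basis N := [ffun i => s i (+) adj a i].
Definition wv (i : 'I_N) (b : bool) : R :=
  if i == a then 2^-1 else if b then (1 - q) / 2 else (1 + q) / 2.
Definition W (s : basis N) : R := \prod_i wv i (s i).
Definition dd (x y : basis N) (i : 'I_N) : C := if x i == y i then 1 else q%:C.

Lemma s1K s : s1 (s1 s) = s.
Proof. by apply/ffunP => i; rewrite !ffunE -addbA addbb addbF. Qed.

Lemma s1_inj : injective s1.
Proof. exact: (can_inj s1K). Qed.

Lemma chi_s1 s z : chi (s1 s) z = chi s z * Pa z.
Proof.
rewrite /chi /Pa -big_split /=; apply: eq_bigr => i _; rewrite ffunE.
case: eqP => [->|_]; first by rewrite adj_irr /= mulr1.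
exact: sgn_xor.
Qed.

Lemma chi_upd s z b : chi s (upd z b) = chi s z.
Proof. by apply: eq_bigr => i _; rewrite ffunE; case: eqP. Qed.

Lemma chiJ s z : (chi s z)^* = chi s z.
Proof.
rewrite rmorph_prod; apply: eq_bigr => i _.
by case: eqP => _; [apply: rmorph1 | apply: sgnJ].
Qed.

Lemma g0_upd z b : g0 (upd z b) = g0 z.
Proof. by rewrite /g0 upd_upd. Qed.

Lemma psi_dec z : graph_amp R adj z = g0 z * ph z.
Proof. exact: graph_amp_upd. Qed.

Lemma phJ z : (ph z)^* = ph z.
Proof. by rewrite /ph; case: (z a); [apply: PaJ | apply: rmorph1]. Qed.

Lemma sumT x y :
  \sum_(s : basis N) (W s)%:C * chi s x * chi s y =
  \prod_i (if i == a then 1 else dd x y i).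
Proof.
rewrite (eq_bigr (fun s : basis N => \prod_i
   ((wv i (s i))%:C * (if i == a then 1 else sgn R (s i && x i)) *
                      (if i == a then 1 else sgn R (s i && y i))))); last first.
  by move=> s _; rewrite !big_split /= rmorph_prod.
rewrite -(bigA_distr_bigA (fun i b =>
   (wv i b)%:C * (if i == a then 1 else sgn R (b && x i)) *
                 (if i == a then 1 else sgn R (b && y i)))) /=.
apply: eq_bigr => i _; rewrite big_bool /= /wv /dd.
case: eqP => _.
  rewrite !mulr1 -rmorphD /=; have -> : (2^-1 + 2^-1 : R) = 1 by field.
  by rewrite rmorph1.
rewrite /q; case: (x i); case: (y i); rewrite /sgn /= ?mulr1 ?mulrN1 ?mulN1r ?opprK;
  rewrite -?rmorphN -rmorphD /= -?(rmorph1 (real_complex R)); by congr (_%:C); field.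
Qed.


Lemma wprod (jz : basis N) : p ^+ #|[set i | jz i]| * (1 - p) ^+ (N - #|[set i | jz i]|)
   = \prod_i (if jz i then p else 1 - p).
Proof.
rewrite (bigID (fun i => jz i)) /=.
rewrite (eq_bigr (fun _ => p)); last by move=> i ->.
rewrite [X in _ = _ * X](eq_bigr (fun _ => 1 - p)); last by move=> i /negbTE ->.
rewrite !prodr_const cardsE; congr (_ * _ ^+ _).
have hc := cardC (fun i : 'I_N => jz i); rewrite card_ord in hc.
by rewrite -[X in (X - _)%N]hc addKn.
Qed.

Lemma rho_closed x y : noisy_rho adj p x y =
  graph_amp R adj x * (graph_amp R adj y)^* * \prod_i dd x y i.
Proof.
rewrite /noisy_rho.
rewrite (eq_bigr (fun jz : basis N => graph_amp R adj x * (graph_amp R adj y)^* *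
   \prod_i ((if jz i then p else 1 - p)%:C * sgn R (jz i && x i) * sgn R (jz i && y i))));
  last first.
  move=> jz _; rewrite wprod rmorph_prod !big_split /= rmorphM rmorph_prod.
  rewrite (eq_bigr (fun i => sgn R (jz i && y i)) (fun i _ => sgnJ _)).
  ring.
rewrite -mulr_sumr; congr (_ * _).
rewrite -(bigA_distr_bigA (fun i b =>
   (if b then p else 1 - p)%:C * sgn R (b && x i) * sgn R (b && y i))) /=.
apply: eq_bigr => i _; rewrite big_bool /= /dd /q.
case: (x i); case: (y i); rewrite /sgn /= ?mulr1 ?mulrN1 ?mulN1r ?opprK;
  rewrite -?rmorphN -rmorphD /= -?(rmorph1 (real_complex R)); by congr (_%:C); ring.
Qed.


Definition coef (k : K) (s : basis N) : C :=
  coefC q%:C (W s)%:C (W (s1 s))%:C (Num.max (W s) (W (s1 s)))%:C k.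
Definition u (k : K) (s x : basis N) : C :=
  fA k (x a) * (gB k false * chi s x + gB k true * chi (s1 s) x) * g0 x.

Lemma uJ k s y : (u k s y)^* =
  fAc k (y a) * (gBc k false * chi s y + gBc k true * chi (s1 s) y) * (g0 y)^*.
Proof.
by rewrite /u !(cjM, cjD) fAJ !gBJ !chiJ.
Qed.

Definition T (s x y : basis N) : C :=
  (W s)%:C * (chi s x * ph x) * (chi s y * ph y) *
  (if x a == y a then 1 else q%:C) * g0 x * (g0 y)^*.

Lemma per_s s x y :
  \sum_(k : K) coef k s * u k s x * (u k s y)^* = 2%:R^-1 * (T s x y + T (s1 s) x y).
Proof.
under eq_bigr do rewrite uJ /u /coef.
rewrite key_id /T !chi_s1 /ph.
have hx := PaK x; have hy := PaK y.
case: (x a); case: (y a) => /=; congr (_ * (_ + _)); ring: hx hy.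
Qed.

Lemma rho_dec x y : noisy_rho adj p x y =
  \sum_(s : basis N) \sum_(k : K) coef k s * u k s x * (u k s y)^*.
Proof.
under eq_bigr do rewrite per_s.
rewrite -mulr_sumr big_split /=.
have -> : \sum_(s : basis N) T (s1 s) x y = \sum_(s : basis N) T s x y.
  by rewrite [RHS](reindex_inj s1_inj).
have -> : forall z : C, 2%:R^-1 * (z + z) = z.
  by move=> z; field.
rewrite /T.
rewrite (eq_bigr (fun s => (ph x * ph y * (if x a == y a then 1 else q%:C) * g0 x * (g0 y)^*)
   * ((W s)%:C * chi s x * chi s y))); last by move=> s _; ring.
rewrite -mulr_sumr sumT rho_closed !psi_dec.
rewrite (bigD1 a) //= [X in _ = _ * X](bigD1 a) //= eqxx mul1r.
rewrite [X in _ = _ * X](eq_bigr (fun i => dd x y i)); last by move=> i /negbTE ->.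
rewrite [(g0 y * ph y)^*]cjM phJ /dd.
case: (x a == y a); ring.
Qed.



Hypothesis p0 : 0 <= p.
Hypothesis p12 : p <= 1 / 2.
Hypothesis hdeg : q * (1 - p) ^+ #|[set j | adj a j]| <= p ^+ #|[set j | adj a j]|.

Lemma p12' : 2 * p <= 1.
Proof. have h := p12. have h2 : (1 / 2 : R) * 2 = 1 by field. nra. Qed.
Lemma q_ge0 : 0 <= q.
Proof. have := p12'; rewrite /q; lra. Qed.
Lemma q_le1 : q <= 1.
Proof. have h := p0. rewrite /q; lra. Qed.

Lemma wv_nb i b : adj a i -> wv i b = if b then p else 1 - p.
Proof.
move=> hai; rewrite /wv; have -> : (i == a) = false.
  by apply/negbTE/eqP => e; rewrite e adj_irr in hai.
by rewrite /q; case: b; field.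
Qed.

Lemma wv_ge0 i b : 0 <= wv i b.
Proof.
have h0 := p0; have h1 := p12'.
rewrite /wv /q; case: (i == a); last case: b; lra.
Qed.

Lemma W_ge0 s : 0 <= W s.
Proof. by apply: prodr_ge0 => i _; apply: wv_ge0. Qed.

Lemma Wq s : q * W s <= W (s1 s).
Proof.
rewrite /W (bigID (fun i => adj a i)) /= [X in _ <= X](bigID (fun i => adj a i)) /=.
have -> : \prod_(i | ~~ adj a i) wv i (s1 s i) = \prod_(i | ~~ adj a i) wv i (s i).
  by apply: eq_bigr => i /negbTE h; rewrite ffunE h addbF.
rewrite mulrA; apply: ler_wpM2r; first by apply: prodr_ge0 => i _; apply: wv_ge0.
apply: (le_trans (y := q * (1 - p) ^+ #|[set j | adj a j]|)).
  apply: ler_wpM2l; first exact: q_ge0.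
  rewrite cardsE -prodr_const; apply: ler_prod => i hai.
  have h0 := p0; have h1 := p12'.
  rewrite wv_nb //; case: (s i); lra.
apply: (le_trans hdeg).
rewrite cardsE -prodr_const; apply: ler_prod => i hai.
have h0 := p0; have h1 := p12'.
have hai2 : adj a i := hai.
rewrite wv_nb // ffunE hai2 addbT; case: (s i) => /=; lra.
Qed.

Lemma castR (x : R) : 0 <= x -> 0 <= x%:C.
Proof. by rewrite ler0c. Qed.

Lemma coef_ge0 k s : 0 <= coef k s.
Proof.
have hr := W_ge0 s; have hrb := W_ge0 (s1 s).
have h1 := Wq s; have h2 := Wq (s1 s); rewrite s1K in h2.
have hq := q_ge0; have hq1 := q_le1.
set r := W s in hr h1 h2 *; set rb := W (s1 s) in hrb h1 h2 *.
set M := Num.max r rb.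
have hMr : r <= M by rewrite le_max lexx.
have hMrb : rb <= M by rewrite le_max lexx orbT.
have hqM1 : q * M <= r.
  rewrite /M; case: (leP r rb) => _; last by nra.
  done.
have hqM2 : q * M <= rb.
  rewrite /M; case: (leP r rb) => _; first by nra.
  done.
rewrite /coef /coefC -/r -/rb -/M.
rewrite -[8%:R](rmorph_nat (real_complex R)) -[2%:R](rmorph_nat (real_complex R)).
rewrite -!fmorphV -?rmorphB -?rmorphD -!rmorphM -?rmorphB.
case: k => [[[|[|[|[|n]]]] hk] e] /=; rewrite lecE /=; apply/andP; (split; [apply/eqP; rewrite ?mulr0 ?mul0r ?addr0 // | ]).
all: rewrite ?mul0r ?mulr0 ?subr0; apply: divr_ge0 => //; nra.
Qed.

Definition swp (v : basis N -> C) :=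
  forall x y, v x * v y = v (upd x (y a)) * v (upd y (x a)).

Lemma u_swp k s : swp (u k s).
Proof. by move=> x y; rewrite /u !upd_a !chi_upd !g0_upd; ring. Qed.

Lemma cjP (I0 : finType) (F : I0 -> C) : (\prod_i F i)^* = \prod_i (F i)^*.
Proof. exact: rmorph_prod. Qed.
Lemma cjS (I0 : finType) (F : I0 -> C) : (\sum_i F i)^* = \sum_i (F i)^*.
Proof. exact: rmorph_sum. Qed.
Lemma cjK (x : C) : (x^*)^* = x.
Proof. exact: conjCK. Qed.

Definition Kt := (basis N * K)%type.
Definition c1 (t : Kt) : C := coef t.2 t.1.
Definition u1 (t : Kt) : basis N -> C := u t.2 t.1.

Lemma rho1 x y : noisy_rho adj p x y = \sum_(t : Kt) c1 t * u1 t x * (u1 t y)^*.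
Proof. by rewrite rho_dec pair_bigA. Qed.

Section Copies.
Variable n : nat.
Definition Cn (tau : {ffun 'I_n -> Kt}) : C := \prod_k c1 (tau k).
Definition Un (tau : {ffun 'I_n -> Kt}) (X : {ffun 'I_n -> basis N}) : C :=
  \prod_k u1 (tau k) (X k).

Lemma rhoN X Y : rho_copies adj p X Y =
  \sum_(tau : {ffun 'I_n -> Kt}) Cn tau * Un tau X * (Un tau Y)^*.
Proof.
rewrite /rho_copies; under eq_bigr do rewrite rho1.
rewrite bigA_distr_bigA /=; apply: eq_bigr => tau _.
by rewrite /Cn /Un cjP -!big_split.
Qed.

Definition sw (X X' : {ffun 'I_n -> basis N}) : {ffun 'I_n -> basis N} :=
  [ffun k => upd (X k) (X' k a)].

Lemma swE X X' k : sw X X' k = upd (X k) (X' k a).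
Proof. by rewrite ffunE. Qed.

Lemma Un_swp tau X X' : Un tau X * Un tau X' = Un tau (sw X X') * Un tau (sw X' X).
Proof.
rewrite /Un -!big_split; apply: eq_bigr => k _; rewrite !swE.
exact: u_swp.
Qed.

Lemma sw_invol X X' : sw (sw X X') (sw X' X) = X.
Proof.
by apply/ffunP => k; rewrite !swE upd_a upd_upd upd_id.
Qed.

Variable A : 'I_N -> bool -> {ffun 'I_n -> bool} -> C.

Lemma kraus_sw z z' X X' :
  kraus A z (sw X X') * kraus A z' (sw X' X) =
  kraus A (upd z (z' a)) X * kraus A (upd z' (z a)) X'.
Proof.
rewrite /kraus -!big_split; apply: eq_bigr => i _ /=.
case: (eqVneq i a) => [->|nia].
  rewrite !upd_a mulrC; congr (A _ _ _ * A _ _ _); apply/ffunP => k;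
  by rewrite !ffunE eqxx.
rewrite !upd_ne //; congr (A _ _ _ * A _ _ _); apply/ffunP => k;
  by rewrite !ffunE (negbTE nia).
Qed.

Definition vv (tau : {ffun 'I_n -> Kt}) (z : basis N) : C :=
  \sum_X kraus A z X * Un tau X.

Lemma vv_swp tau : swp (vv tau).
Proof.
move=> z z'; rewrite /vv big_distrl /=.
under eq_bigr do rewrite big_distrr /=.
rewrite [RHS]big_distrl /=.
under [RHS]eq_bigr do rewrite big_distrr /=.
rewrite !pair_bigA /=.
pose phi (P : {ffun 'I_n -> basis N} * {ffun 'I_n -> basis N}) := (sw P.1 P.2, sw P.2 P.1).
have phiK : involutive phi by move=> [X X']; rewrite /phi /= !sw_invol.
rewrite (reindex_inj (inv_inj phiK)) /=.
apply: eq_bigr => -[X X'] _ /=.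
have h1 := kraus_sw z z' X X'; have h2 := Un_swp tau X X'.
transitivity ((kraus A z (sw X X') * kraus A z' (sw X' X)) *
              (Un tau (sw X X') * Un tau (sw X' X))); first by ring.
rewrite h1 -h2; ring.
Qed.

Lemma slocc_dec z w : slocc_out adj p A z w =
  \sum_(tau : {ffun 'I_n -> Kt}) Cn tau * vv tau z * (vv tau w)^*.
Proof.
rewrite /slocc_out.
transitivity (\sum_X \sum_Y \sum_(tau : {ffun 'I_n -> Kt})
   Cn tau * (kraus A z X * Un tau X) * (kraus A w Y * Un tau Y)^*).
  apply: eq_bigr => X _; apply: eq_bigr => Y _.
  rewrite rhoN big_distrr big_distrl /=; apply: eq_bigr => tau _.
  rewrite cjM; ring.
under eq_bigr do rewrite exchange_big.
rewrite exchange_big; apply: eq_bigr => tau _.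
rewrite /vv cjS [RHS]big_distrr /=.
under [RHS]eq_bigr do rewrite big_distrr big_distrl /=.
rewrite [RHS]exchange_big; apply: eq_bigr => X _; apply: eq_bigr => Y _; ring.
Qed.

Definition ipv tau : C := \sum_z (graph_amp R adj z)^* * vv tau z.

Lemma trace_dec : out_trace adj p A =
  \sum_(tau : {ffun 'I_n -> Kt}) Cn tau * \sum_z vv tau z * (vv tau z)^*.
Proof.
rewrite /out_trace; under eq_bigr do rewrite slocc_dec.
rewrite exchange_big; apply: eq_bigr => tau _; rewrite big_distrr /=.
by apply: eq_bigr => z _; ring.
Qed.

Lemma overlap_dec : out_overlap adj p A =
  \sum_(tau : {ffun 'I_n -> Kt}) Cn tau * ipv tau * (ipv tau)^*.
Proof.
rewrite /out_overlap.
transitivity (\sum_z \sum_w \sum_(tau : {ffun 'I_n -> Kt})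
   Cn tau * ((graph_amp R adj z)^* * vv tau z) * ((graph_amp R adj w)^* * vv tau w)^*).
  apply: eq_bigr => z _; apply: eq_bigr => w _.
  rewrite slocc_dec big_distrr big_distrl /=; apply: eq_bigr => tau _.
  rewrite [((graph_amp R adj w)^* * _)^*]cjM cjK; ring.
under eq_bigr do rewrite exchange_big.
rewrite exchange_big; apply: eq_bigr => tau _.
rewrite /ipv cjS [RHS]big_distrr /=.
under [RHS]eq_bigr do rewrite big_distrr big_distrl /=.
rewrite [RHS]exchange_big; apply: eq_bigr => z _; apply: eq_bigr => w _; ring.
Qed.

End Copies.

Definition flipa (z : basis N) : basis N := upd z (~~ z a).
Lemma flipaK : involutive flipa.
Proof. by move=> z; rewrite /flipa upd_a upd_upd negbK upd_id. Qed.

Lemma sum_half (F : basis N -> C) :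
  \sum_z F z = 2%:R^-1 * \sum_z (F (upd z false) + F (upd z true)).
Proof.
have -> : \sum_z (F (upd z false) + F (upd z true)) = \sum_z (F z + F (flipa z)).
  apply: eq_bigr => z _.
  have ht : z a -> upd z true = z by move=> h; rewrite -[RHS]upd_id h.
  have hf : ~~ z a -> upd z false = z by move=> h; rewrite -[RHS]upd_id (negbTE h).
  case: (boolP (z a)) => h; rewrite /flipa ?h ?(negbTE h) /=.
    by rewrite (ht h) addrC.
  by rewrite (hf h).
rewrite big_split /=.
have -> : \sum_z F (flipa z) = \sum_z F z by rewrite [RHS](reindex_inj (inv_inj flipaK)).
by field.
Qed.

Lemma swp_prod v : swp v -> exists (f0 f1 : C) (g : basis N -> C),
  (forall z b, g (upd z b) = g z) /\ (forall z, v z = (if z a then f1 else f0) * g z).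
Proof.
move=> hv; case: (pickP (fun z => v (upd z false) != 0)) => [z0 hz0|h0].
  exists 1, (v (upd z0 true) / v (upd z0 false)), (fun z => v (upd z false)).
  split; first by move=> z b; rewrite upd_upd.
  move=> z; case: (boolP (z a)) => hza; last first.
    by rewrite mul1r -[in LHS](upd_id z) (negbTE hza).
  have := hv (upd z0 false) z; rewrite upd_upd upd_a hza => e.
  apply: (mulfI hz0); rewrite e; field; exact: hz0.
exists 0, 1, (fun z => v (upd z true)).
split; first by move=> z b; rewrite upd_upd.
move=> z; case: (boolP (z a)) => hza.
  by rewrite mul1r -[in LHS](upd_id z) hza.
rewrite mul0r -[in LHS](upd_id z) (negbTE hza).
by move: (h0 z) => /= /negbFE /eqP.
Qed.

Lemma cjR (x : R) : (x%:C)^* = x%:C.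
Proof. exact: conjc_real. Qed.

Lemma sgnprodK (I0 : finType) (P : pred I0) (F : I0 -> bool) :
  (\prod_(i | P i) sgn R (F i)) * (\prod_(i | P i) sgn R (F i))^* = 1.
Proof.
rewrite rmorph_prod -big_split /= big1 // => i _.
by rewrite (sgnJ (F i)) sgnK.
Qed.

Lemma g0_norm z : g0 z * (g0 z)^* = ((2 ^+ N : R)^-1)%:C.
Proof.
rewrite /g0 /graph_amp cjM cjR.
set P0 := \prod_i _.
have hP : P0 * P0^* = 1.
  rewrite /P0 rmorph_prod -big_split /= big1 // => i _.
  exact: sgnprodK.
have -> : ((Num.sqrt (2 ^+ N : R))^-1)%:C * P0 * (((Num.sqrt (2 ^+ N : R))^-1)%:C * P0^*)
   = ((Num.sqrt (2 ^+ N : R))^-1 * (Num.sqrt (2 ^+ N : R))^-1)%:C * (P0 * P0^*).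
  by rewrite rmorphM /=; ring.
rewrite hP mulr1; congr (_%:C).
by rewrite -invfM -expr2 sqr_sqrtr // exprn_ge0.
Qed.

Lemma card_basis : #|{: basis N}| = (2 ^ N)%N.
Proof. by rewrite card_ffun card_bool card_ord. Qed.

Lemma sum_g0_norm : \sum_z g0 z * (g0 z)^* = 1.
Proof.
under eq_bigr do rewrite g0_norm.
rewrite sumr_const card_basis -(rmorphMn (real_complex R)) -(rmorph1 (real_complex R)); congr (_%:C).
rewrite -mulr_natr natrX mulVf // expf_neq0 // pnatr_eq0. done.
Qed.

Variable j0 : 'I_N.
Hypothesis hj0 : adj a j0.

Definition fj (z : basis N) : basis N := [ffun i => if i == j0 then ~~ z i else z i].
Lemma fjK : involutive fj.
Proof. by move=> z; apply/ffunP => i; rewrite !ffunE; case: eqP => // _; rewrite negbK. Qed.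

Lemma Pa_fj z : Pa (fj z) = - Pa z.
Proof.
rewrite /Pa (bigD1 j0) //= [in RHS](bigD1 j0) //= ffunE eqxx hj0 /=.
rewrite (eq_bigr (fun i => sgn R (adj a i && z i))); last first.
  by move=> i /negbTE h; rewrite ffunE h.
by rewrite /sgn; case: (z j0); rewrite ?mulN1r ?mul1r ?opprK.
Qed.

Lemma sum_Pa : \sum_z Pa z = 0.
Proof.
have h : \sum_z Pa z = - \sum_z Pa z.
  rewrite [LHS](reindex_inj (inv_inj fjK)) -sumrN.
  by apply: eq_bigr => z _; rewrite Pa_fj.
have : \sum_z Pa z + \sum_z Pa z = 0 by rewrite [X in X + _]h addNr.
move: (\sum_z Pa z) => S hS.
have -> : S = 2%:R^-1 * (S + S) by field.
by rewrite hS mulr0.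
Qed.

Lemma ortho01 : \sum_z g0 z * (g0 z * Pa z)^* = 0.
Proof.
under eq_bigr do rewrite cjM PaJ mulrA g0_norm.
by rewrite -big_distrr /= sum_Pa mulr0.
Qed.

Lemma norm1 : \sum_z (g0 z * Pa z) * (g0 z * Pa z)^* = 1.
Proof.
rewrite -[RHS]sum_g0_norm; apply: eq_bigr => z _.
rewrite cjM PaJ; have := PaK z; move: (Pa z) => P hP.
by rewrite -mulrA [P * _]mulrC -!mulrA hP mulr1.
Qed.

Lemma bessel (e0 e1 g : basis N -> C) :
  \sum_z e0 z * (e0 z)^* = 1 -> \sum_z e1 z * (e1 z)^* = 1 ->
  \sum_z e0 z * (e1 z)^* = 0 ->
  (\sum_z (e0 z)^* * g z) * (\sum_z (e0 z)^* * g z)^* +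
  (\sum_z (e1 z)^* * g z) * (\sum_z (e1 z)^* * g z)^* <= \sum_z g z * (g z)^*.
Proof.
move=> h00 h11 h01.
set a0 := \sum_z (e0 z)^* * g z; set a1 := \sum_z (e1 z)^* * g z.
have h10 : \sum_z e1 z * (e0 z)^* = 0.
  transitivity ((\sum_z e0 z * (e1 z)^*)^*); last by rewrite h01 conjC0.
  by rewrite cjS; apply: eq_bigr => z _; rewrite cjM cjK mulrC.
have ha0 : \sum_z g z * (e0 z)^* = a0 by apply: eq_bigr => z _; rewrite mulrC.
have ha1 : \sum_z g z * (e1 z)^* = a1 by apply: eq_bigr => z _; rewrite mulrC.
have hb0 : \sum_z e0 z * (g z)^* = a0^*.
  by rewrite /a0 cjS; apply: eq_bigr => z _; rewrite cjM cjK.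
have hb1 : \sum_z e1 z * (g z)^* = a1^*.
  by rewrite /a1 cjS; apply: eq_bigr => z _; rewrite cjM cjK.
have H : 0 <= \sum_z (g z - a0 * e0 z - a1 * e1 z) * (g z - a0 * e0 z - a1 * e1 z)^*.
  by apply: sumr_ge0 => z _; apply: mul_conjC_ge0.
rewrite (eq_bigr (fun z => g z * (g z)^* + (- a0^*) * (g z * (e0 z)^*)
   + (- a1^*) * (g z * (e1 z)^*) + (- a0) * (e0 z * (g z)^*)
   + (a0 * a0^*) * (e0 z * (e0 z)^*) + (a0 * a1^*) * (e0 z * (e1 z)^*)
   + (- a1) * (e1 z * (g z)^*) + (a1 * a0^*) * (e1 z * (e0 z)^*)
   + (a1 * a1^*) * (e1 z * (e1 z)^*))) in H; last first.
  by move=> z _; rewrite !(cjD, cjN, cjM); ring.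
rewrite !big_split /= -!big_distrr /= ha0 ha1 hb0 hb1 h00 h11 h01 h10 in H.
rewrite -subr_ge0; move: H; congr (_ <= _); ring.
Qed.

Definition ipf (v : basis N -> C) : C := \sum_z (graph_amp R adj z)^* * v z.

Lemma nn (x : C) : 0 <= x * x^*.
Proof. exact: mul_conjC_ge0. Qed.

Lemma bound v : swp v -> 2%:R * (ipf v * (ipf v)^*) <= \sum_z v z * (v z)^*.
Proof.
move=> /swp_prod [f0 [f1 [g [hg hv]]]].
set a0 := \sum_z (g0 z)^* * g z.
set a1 := \sum_z (g0 z * Pa z)^* * g z.
set G := \sum_z g z * (g z)^*.
have hip : ipf v = 2%:R^-1 * (f0 * a0 + f1 * a1).
  rewrite /ipf sum_half; congr (_ * _).
  rewrite /a0 /a1 big_distrr [X in _ = _ + X]big_distrr -big_split /=.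
  apply: eq_bigr => z _; rewrite !psi_dec !hv !upd_a !hg /ph !upd_a Pa_upd !g0_upd.
  rewrite !cjM cj1; ring.
have hn : \sum_z v z * (v z)^* = 2%:R^-1 * ((f0 * f0^* + f1 * f1^*) * G).
  rewrite sum_half; congr (_ * _).
  rewrite /G big_distrr /=.
  apply: eq_bigr => z _; rewrite !hv !upd_a !hg !cjM; ring.
have hB := bessel g sum_g0_norm norm1 ortho01.
rewrite -/a0 -/a1 -/G in hB.
set X := f0 * a0 + f1 * a1.
set F := f0 * f0^* + f1 * f1^*.
have hF : 0 <= F by apply: addr_ge0; apply: nn.
have hL : X * X^* <= F * (a0 * a0^* + a1 * a1^*).
  rewrite -subr_ge0.
  have -> : F * (a0 * a0^* + a1 * a1^*) - X * X^* =
           (f0 * a1^* - f1 * a0^*) * (f0 * a1^* - f1 * a0^*)^*.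
    by rewrite /F /X !(cjD, cjN, cjM) !cjK; ring.
  exact: nn.
have hL2 : X * X^* <= F * G.
  apply: (le_trans hL); exact: ler_wpM2l.
rewrite hn hip cjM.
have -> : (2%:R^-1 : C)^* = 2%:R^-1.
  by rewrite fmorphV /= rmorph_nat.
have -> : 2%:R * (2%:R^-1 * X * (2%:R^-1 * X^*)) = 2%:R^-1 * (X * X^*) :> C.
  by field.
apply: ler_wpM2l => //; rewrite invr_ge0 ler0n //.
Qed.

Lemma not_purif : ~ purifiable adj p.
Proof.
move=> hp.
have h4 : (0 : R) < 4%:R^-1 by rewrite invr_gt0 ltr0n.
case: (hp _ h4) => n [A [htr hov]].
rewrite (trace_dec A) (overlap_dec A) in htr hov.
set T := \sum_tau _ in htr hov.
set O := \sum_tau _ in hov.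
have hC : forall tau : {ffun 'I_n -> Kt}, 0 <= Cn tau.
  by move=> tau; apply: prodr_ge0 => k _; apply: coef_ge0.
have hO2 : 2%:R * O <= T.
  rewrite /O /T big_distrr /=; apply: ler_sum => tau _.
  have := bound (vv_swp A tau); rewrite -/(ipv A tau) => hb.
  rewrite mulrCA -mulrA [X in X <= _](_ : _ = Cn tau * (2%:R * (ipv A tau * (ipv A tau)^*))).
    exact: ler_wpM2l.
  by ring.
have hT0 : 0 <= T.
  by apply: sumr_ge0 => tau _; apply: mulr_ge0 => //; apply: sumr_ge0 => z _; apply: nn.
have hT : 0 < T by rewrite lt_def htr hT0.
have h1 : 2%:R * ((1 - 4%:R^-1)%:C * T) <= T.
  apply: le_trans hO2; apply: ler_wpM2l => //; exact: ler0n.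
have e : (1 - 4%:R^-1 : R)%:C = 1 - 4%:R^-1.
  by rewrite rmorphB rmorph1 fmorphV /= rmorph_nat.
rewrite e -subr_ge0 in h1.
have e2 : T - 2%:R * ((1 - 4%:R^-1) * T) = - (2%:R^-1 * T) :> C by field.
rewrite e2 oppr_ge0 in h1.
have hpos : 0 < 2%:R^-1 * T by apply: mulr_gt0 => //; rewrite invr_gt0 ltr0n.
by have := lt_le_trans hpos h1; rewrite ltxx.
Qed.

End Basics.

Theorem mainTheorem3 (R : realType) (N : nat) (adj : rel 'I_N) (D : nat) (p : R) :
  (2 <= N)%N ->
  simple_graph adj ->
  connected_graph adj ->
  is_min_degree adj D ->
  (1 <= D)%N ->
  0 <= p -> p <= 1 / 2 ->
  2 * (1 - p) ^+ D.+1 <= (1 - p) ^+ D + p ^+ D ->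
  ~ purifiable adj p.
Proof.
move=> _ [hsym hirr] _ [_ [a ha]] hD hp0 hp12 hc.
have hdeg : q p * (1 - p) ^+ #|[set j | adj a j]| <= p ^+ #|[set j | adj a j]|.
  move: ha; rewrite /degree => ->.
  move: hc; rewrite exprS /q.
  move: ((1 - p) ^+ D) (p ^+ D) => t u hc.
  have -> : (1 - 2 * p) * t = 2 * ((1 - p) * t) - t by ring.
  move: hc; move: ((1 - p) * t) => w; lra.
have : (0 < #|[set j | adj a j]|)%N by rewrite -/(degree adj a) ha.
rewrite card_gt0 => /set0Pn [j0]; rewrite inE => hj0.
exact: (not_purif hsym hirr hp0 hp12 hdeg hj0).
Qed.
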